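(* In type $C_\infty$, let $\lambda$ be a partition of $n$ with charge $\kappa\in\mathbb Z$ and let $A$ be a Garnir node of $[\lambda]$. Then there is no row-strict $\lambda$-tableau $\mathsf t$ with $\mathsf t\rhd\mathsf g^A$ and $\mathrm{res}\,\mathsf t=\mathrm{res}\,\mathsf g^A$.
   Context: Residues in type $C_\infty$: node $(r,c)$ of $\lambda$ has residue $|\kappa+c-r|\in\mathbb Z_{\ge0}$; for a tableau $\mathsf t$ (bijection $[\lambda]\to\{1,\dots,n\}$), $\mathrm{res}\,\mathsf t=(\mathrm{res}\,\mathsf t^{-1}(1),\dots,\mathrm{res}\,\mathsf t^{-1}(n))$. Row-strict means entries increase along rows. $\mathsf t^\lambda$ is the initial tableau (entries in order along successive rows), $w^{\mathsf t}\in\mathfrak S_n$ satisfies $w^{\mathsf t}\mathsf t^\lambda=\mathsf t$ ($\mathfrak S_n$ acting on entries). Dominance order on tableaux: $\mathsf t\trianglerighteq\mathsf s$ iff $w^{\mathsf t}\preccurlyeq w^{\mathsf s}$ in Bruhat order; $\mathsf t\rhd\mathsf s$ means $\mathsf t\trianglerighteq\mathsf s$ and $\mathsf t\ne\mathsf s$. A Garnir node is $A=(r,c)$ with $(r+1,c)\in[\lambda]$; the Garnir tableau $\mathsf g^A$ agrees with $\mathsf t^\lambda$ outside the belt $\{(r,a):a\ge c\}\cup\{(r+1,a):a\le c\}$ and fills the belt with $\mathsf t^\lambda(r,c),\dots,\mathsf t^\lambda(r+1,c)$, first along row $r+1$ left to right, then along row $r$ left to right. *)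

(* Defs.v *)
From HB Require Import structures.
From mathcomp Require Import all_boot all_order all_algebra.
Set Implicit Arguments. Unset Strict Implicit. Unset Printing Implicit Defensive.
Import Order.TTheory GRing.Theory Num.Theory.

Definition is_partition (lam : seq nat) : bool :=
  sorted geq lam && all (fun p => 0 < p) lam.

(* Nodes are 0-indexed pairs (row, column). *)
Definition in_diagram (lam : seq nat) (r c : nat) : bool :=
  (r < size lam) && (c < nth 0 lam r).

Definition nodes (lam : seq nat) : seq (nat * nat) :=
  flatten [seq [seq (r, c) | c <- iota 0 (nth 0 lam r)] | r <- iota 0 (size lam)].

Definition node_res (kappa : int) (r c : nat) : nat :=
  `|(kappa + (c%:Z) - (r%:Z))%R|%N.

(* A lam-tableau with entries {0,...,n-1}: a bijection [lam] -> {0,..,n-1}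
   (given as a function on N x N, only its values on [lam] matter). *)
Definition is_tableau (lam : seq nat) (n : nat) (t : nat -> nat -> nat) : Prop :=
  [/\ (forall r c, in_diagram lam r c -> t r c < n),
      (forall r c r' c', in_diagram lam r c -> in_diagram lam r' c' ->
          t r c = t r' c' -> (r, c) = (r', c')) &
      (forall k, k < n -> exists r c, in_diagram lam r c /\ t r c = k)].

Definition tab_eq (lam : seq nat) (t s : nat -> nat -> nat) : Prop :=
  forall r c, in_diagram lam r c -> t r c = s r c.

Definition row_strict (lam : seq nat) (t : nat -> nat -> nat) : Prop :=
  forall r c, in_diagram lam r c.+1 -> t r c < t r c.+1.

(* Initial tableau t^lam: entries 0,1,... along successive rows. *)
Definition tlam (lam : seq nat) (r c : nat) : nat := flatten_index lam r c.

Definition node_of (lam : seq nat) (t : nat -> nat -> nat) (k : nat) : nat * nat :=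
  nth (0, 0) (nodes lam) (find (fun x => t x.1 x.2 == k) (nodes lam)).

Definition res_seq (lam : seq nat) (n : nat) (kappa : int) (t : nat -> nat -> nat)
  : seq nat :=
  [seq node_res kappa (node_of lam t k).1 (node_of lam t k).2 | k <- iota 0 n].

(* w^t in one-line notation: w^t(m) = t(node of t^lam containing m),
   so that w^t t^lam = t. *)
Definition wperm (lam : seq nat) (n : nat) (t : nat -> nat -> nat) : seq nat :=
  [seq t (reshape_index lam m) (reshape_offset lam m) | m <- iota 0 n].

(* Coxeter length of a permutation in one-line notation = number of inversions. *)
Definition inversions (s : seq nat) : nat :=
  \sum_(i < size s) \sum_(j < size s) ((i < j) && (nth 0 s j < nth 0 s i)).

(* Right multiplication by the transposition (i j): swap positions i and j. *)
Definition swap_pos (s : seq nat) (i j : nat) : seq nat :=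
  set_nth 0 (set_nth 0 s i (nth 0 s j)) j (nth 0 s i).

Inductive bruhat_le : seq nat -> seq nat -> Prop :=
  | bruhat_refl u : bruhat_le u u
  | bruhat_step u v i j : i < j < size u ->
      inversions u < inversions (swap_pos u i j) ->
      bruhat_le (swap_pos u i j) v -> bruhat_le u v.

Definition tab_dom (lam : seq nat) (n : nat) (t s : nat -> nat -> nat) : Prop :=
  bruhat_le (wperm lam n t) (wperm lam n s).

Definition tab_sdom (lam : seq nat) (n : nat) (t s : nat -> nat -> nat) : Prop :=
  tab_dom lam n t s /\ ~ tab_eq lam t s.

(* Garnir tableau g^A for A = (r,c) (0-indexed), (r+1,c) in [lam].
   Belt = {(r,a) : a >= c} u {(r+1,a) : a <= c}, filled with
   t^lam(r,c), ..., t^lam(r+1,c), first along row r+1, then along row r. *)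
Definition garnir (lam : seq nat) (r c : nat) (i j : nat) : nat :=
  if (i == r.+1) && (j <= c) then tlam lam r c + j
  else if (i == r) && (c <= j) then tlam lam r c + c.+1 + (j - c)
  else tlam lam i j.

(* Main.v *)
Require Import Defs.
From HB Require Import structures.
From mathcomp Require Import all_boot all_order all_algebra zify.
From mathcomp Require Import fingroup perm.
Set Implicit Arguments. Unset Strict Implicit. Unset Printing Implicit Defensive.

Lemma nth_swap (s : seq nat) i j k : i < size s -> j < size s ->
  nth 0 (swap_pos s i j) k =
  if k == j then nth 0 s i else if k == i then nth 0 s j else nth 0 s k.
Proof. by move=> Hi Hj; rewrite /swap_pos nth_set_nth /= nth_set_nth. Qed.

Lemma size_swap (s : seq nat) i j : i < size s -> j < size s ->
  size (swap_pos s i j) = size s.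
Proof.
move=> Hi Hj; rewrite /swap_pos !size_set_nth.
by apply/eqP; rewrite eqn_leq; apply/andP; split; lia.
Qed.

Lemma leq_bool (b c : bool) : (b -> c) -> b <= c.
Proof. by case: b c => [] [] // ->. Qed.

Definition sw (i j k : nat) := if k == i then j else if k == j then i else k.

Lemma inv_pairE (s : seq nat) :
  inversions s = \sum_(x : 'I_(size s) * 'I_(size s))
     ((x.1 < x.2) && (nth 0 s x.2 < nth 0 s x.1)).
Proof. by rewrite /inversions pair_bigA. Qed.

Lemma inv_swap_le (s : seq nat) i j : i < j -> j < size s ->
  nth 0 s j <= nth 0 s i -> inversions (swap_pos s i j) <= inversions s.
Proof.
move=> Hij Hj Hle.
have Hi : i < size s by lia.
have Hs := size_swap Hi Hj.
rewrite inv_pairE [in X in _ <= X]inv_pairE.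
set s' := swap_pos s i j.
set N := size s in Hs Hi Hj *.
have -> : size s' = N by [].
pose i' : 'I_N := Ordinal Hi. pose j' : 'I_N := Ordinal Hj.
pose sg := tperm i' j'.
have sgE : forall x : 'I_N, val (sg x) = sw i j x.
  move=> x; rewrite /sg /sw; case: tpermP => [->|->|H1 H2].
  - by rewrite eqxx.
  - by case: eqP => //= E; rewrite eqxx.
  - case: eqP => [E|_]; first by case: H1; apply: val_inj.
    by case: eqP => [E|_] //; case: H2; apply: val_inj.
pose phi (x : 'I_N * 'I_N) :=
  if (x.1 < x.2) == (sg x.1 < sg x.2) then (sg x.1, sg x.2) else x.
have phiK : involutive phi.
  move=> [x1 x2]; rewrite /phi /=.
  case E: ((x1 < x2) == (sg x1 < sg x2)) => /=.
    by rewrite !tpermK eq_sym E.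
  by rewrite E.
rewrite (reindex_inj (inv_inj phiK)) /=.
apply: leq_sum => [[x1 x2]] _; rewrite /phi /=.
have Hx1 := ltn_ord x1; have Hx2 := ltn_ord x2.
case: ifP => [/eqP E|/negbT E] /=.
  rewrite !sgE !nth_swap // /sw.
  apply: leq_bool => /andP [H1 H2].
  move: E H1 H2; rewrite !sgE /sw.
  move: (nat_of_ord x1) (nat_of_ord x2) Hx1 Hx2 => p q Hp Hq.
  by (do ! case: ifP => /eqP ?); subst; lia.
rewrite !nth_swap //.
apply: leq_bool => /andP [H1 H2].
move: E H1 H2; rewrite !sgE /sw.
move: (nat_of_ord x1) (nat_of_ord x2) Hx1 Hx2 => p q Hp Hq.
by (do ! case: ifP => /eqP ?); subst; lia.
Qed.

Definition Pinv (s : seq nat) p := forall q, q <= p -> q < size s -> nth 0 s q <= p.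
Definition Qinv (s : seq nat) p := forall q, p <= q -> q < size s -> p <= nth 0 s q.

Lemma bruhat_PQ u v p : bruhat_le u v ->
  (Pinv v p -> Pinv u p) /\ (Qinv v p -> Qinv u p).
Proof.
elim=> [w|w v' i j /andP [Hij Hj] Hinv _ [IH1 IH2]]; first by [].
have Hlt : nth 0 w i < nth 0 w j.
  rewrite ltnNge; apply/negP => Hle.
  by have := inv_swap_le Hij Hj Hle; lia.
have Hi : i < size w by lia.
have Hs := size_swap Hi Hj.
have Ei : nth 0 (swap_pos w i j) i = nth 0 w j.
  have Hne : (i == j) = false by apply/eqP; lia.
  by rewrite nth_swap // Hne eqxx.
have Ej : nth 0 (swap_pos w i j) j = nth 0 w i by rewrite nth_swap // eqxx.
have Eo : forall q, q != i -> q != j -> nth 0 (swap_pos w i j) q = nth 0 w q.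
  by move=> q Hqi Hqj; rewrite nth_swap // (negbTE Hqi) (negbTE Hqj).
split.
- move=> /IH1; rewrite /Pinv Hs => HP q Hq Hqs.
  have [Eq|Hqi] := eqVneq q i; first subst q.
    have [Hjp|Hjp] := leqP j p.
      by have := HP j Hjp Hj; rewrite Ej.
    by have := HP i Hq Hi; rewrite Ei; lia.
  have [Eq|Hqj] := eqVneq q j; first subst q.
    by have := HP i (leq_trans (ltnW Hij) Hq) Hi; rewrite Ei.
  by have := HP q Hq Hqs; rewrite Eo.
- move=> /IH2; rewrite /Qinv Hs => HQ q Hq Hqs.
  have [Eq|Hqi] := eqVneq q i; first subst q.
    by have := HQ j (leq_trans Hq (ltnW Hij)) Hj; rewrite Ej.
  have [Eq|Hqj] := eqVneq q j; first subst q.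
    have [Hip|Hip] := leqP p i.
      by have := HQ i Hip Hi; rewrite Ei.
    by have := HQ j Hq Hj; rewrite Ej; lia.
  by have := HQ q Hq Hqs; rewrite Eo.
Qed.
Lemma abs_eq (e : int) (x y : nat) : `|(e + x%:Z)%R|%N = `|(e + y%:Z)%R|%N ->
  (x = y)%N \/ (x%:Z + y%:Z = - (e *+ 2))%R.
Proof. lia. Qed.

Lemma incr_gen (X : nat -> nat) (c : nat) : (forall j, j < c -> X j < X j.+1) ->
  forall j1 j2, j1 < j2 <= c -> X j1 + (j2 - j1) <= X j2.
Proof.
move=> H j1; elim=> [|j2 IH] /andP [H1 H2]; first by [].
have [E|E] := eqVneq j1 j2.
  subst; have := H j2 H2; lia.
have := IH (_ : j1 < j2 <= c); have := H j2 H2; lia.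
Qed.

Lemma belt_comb (c L : nat) (e : int) (X Y : nat -> nat) :
 c < L ->
 (forall j, j <= c -> X j <= L) -> (forall i, c + i < L -> Y i <= L) ->
 (forall j, j < c -> X j < X j.+1) -> (forall i, (c + i).+1 < L -> Y i < Y i.+1) ->
 (forall j i, j <= c -> c + i < L -> X j <> Y i) ->
 (forall k, k <= L -> (exists2 j, j <= c & X j = k) \/ (exists2 i, c + i < L & Y i = k)) ->
 (forall j, j <= c -> `|(e + j%:Z)%R|%N = `|(e + (X j)%:Z)%R|%N) ->
 (forall i, c + i < L -> `|(e + (c + i).+1%:Z)%R|%N = `|(e + (Y i)%:Z)%R|%N) ->
 (forall j, j <= c -> X j = j) /\ (forall i, c + i < L -> Y i = (c + i).+1).
Proof.
move=> HcL HXL HYL HXi HYi Hdis Hcov HRX HRY.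
have HXg : forall j1 j2, j1 < j2 <= c -> X j1 + (j2 - j1) <= X j2 := incr_gen HXi.
have HYg : forall i1 i2, i1 < i2 -> c + i2 < L -> Y i1 + (i2 - i1) <= Y i2.
  move=> i1 i2 H1 H2.
  have := @incr_gen Y (L - c).-1 _ i1 i2; apply; first by move=> i Hi; apply: HYi; lia.
  lia.
have HX : forall j, j <= c -> X j = j.
  elim/ltn_ind=> j IH Hj.
  have Hge : j <= X j.
    case: j IH Hj => [|j] IH Hj; first by [].
    have := IH j (leqnn _) (ltnW Hj); have := HXi j Hj; lia.
  case: (ltngtP (X j) j) => [|Hgt|//]; first lia.
  have HjL : j <= L by have := HXL j Hj; lia.
  have [[j'' Hj'' Ej'']|[i Hi Ei]] := Hcov j HjL.
    case: (ltngtP j'' j) => [Hlt|Hlt|Heq].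
    - have := IH j'' Hlt (ltnW (leq_trans Hlt Hj)); lia.
    - have H3 : j < j'' <= c by lia.
      have := HXg j j'' H3; lia.
    - by rewrite -{1}Heq.
  have Ei0 : i = 0.
    case: i Hi Ei => [//|i] Hi Ei.
    have H0 : 0 < i.+1 by [].
    have := HYg 0 i.+1 H0 Hi => HY0.
    have Hw : Y 0 < j by lia.
    have := IH (Y 0) Hw (ltnW (leq_trans Hw Hj)) => HXw.
    have H00 : c + 0 < L by lia.
    by case: (Hdis (Y 0) 0 (ltnW (leq_trans Hw Hj)) H00).
  subst i.
  have := HRY 0 Hi; rewrite Ei addn0 => /abs_eq [?|E1]; first lia.
  have := HRX j Hj => /abs_eq [?|E2]; first lia.
  have EXj : X j = c.+1 by lia.
  have [Hjc|Hjc] := ltnP j c.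
    have := HXi j Hjc => H4.
    have := HRX j.+1 Hjc => /abs_eq [?|E3]; lia.
  have Ejc : j = c by lia.
  subst j; lia.
split=> // i Hi.
have HY0 : c < Y 0.
  rewrite ltnNge; apply/negP => H0.
  have H00 : c + 0 < L by lia.
  by case: (Hdis (Y 0) 0 H0 H00); rewrite HX.
have Hlow : (c + i).+1 <= Y i.
  case: i Hi => [|i] Hi; first by rewrite addn0.
  have := HYg 0 i.+1 (ltn0Sn _) Hi; lia.
have Hup : Y i <= (c + i).+1.
  have [Hl|Hl] := ltnP i (L - c).-1.
    have Hl2 : c + (L - c).-1 < L by lia.
    have := HYg i (L - c).-1 Hl Hl2; have := HYL _ Hl2; lia.
  have := HYL i Hi; lia.
lia.
Qed.
Lemma mem_nodes lam i j : ((i, j) \in nodes lam) = in_diagram lam i j.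
Proof.
apply/flatten_mapP/andP => [[r' Hr' /mapP [c' Hc' [-> ->]]]|[Hi Hj]].
  by move: Hr' Hc'; rewrite !mem_iota /= !add0n => -> ->.
by exists i; rewrite ?mem_iota //; apply/mapP; exists j; rewrite ?mem_iota.
Qed.

Lemma node_of_eq lam (f : nat -> nat -> nat) k i j :
  in_diagram lam i j -> f i j = k ->
  (forall i' j', in_diagram lam i' j' -> f i' j' = k -> (i', j') = (i, j)) ->
  node_of lam f k = (i, j).
Proof.
move=> Hd Hf Hu; rewrite /node_of.
set P := (fun x : nat * nat => f x.1 x.2 == k).
have Hhas : has P (nodes lam) by apply/hasP; exists (i, j); rewrite ?mem_nodes //; apply/eqP.
have := nth_find (0, 0) Hhas; have := mem_nth (0, 0) (_ : find P (nodes lam) < size (nodes lam)).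
rewrite -has_find => /(_ Hhas).
case: (nth _ _ _) => i' j'; rewrite mem_nodes /P /= => Hd' /eqP Hf'.
exact: Hu.
Qed.

Lemma res_nth lam n kappa f k : k < n ->
  nth 0 (res_seq lam n kappa f) k =
  node_res kappa (node_of lam f k).1 (node_of lam f k).2.
Proof. by move=> Hk; rewrite /res_seq (nth_map 0) ?size_iota // nth_iota. Qed.

Lemma size_wperm lam n f : size (wperm lam n f) = n.
Proof. by rewrite /wperm size_map size_iota. Qed.

Lemma wperm_nth lam n f m : m < n ->
  nth 0 (wperm lam n f) m = f (reshape_index lam m) (reshape_offset lam m).
Proof. by move=> Hk; rewrite /wperm (nth_map 0) ?size_iota // nth_iota. Qed.

Lemma tlam_lex lam i1 j1 i2 j2 : in_diagram lam i1 j1 -> in_diagram lam i2 j2 ->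
  (tlam lam i1 j1 <= tlam lam i2 j2) = (i1 < i2) || ((i1 == i2) && (j1 <= j2)).
Proof.
move=> /andP [_ H1] /andP [_ H2].
by rewrite /tlam (reshape_leq lam) !flatten_indexKl ?flatten_indexKr.
Qed.

Lemma tlam_lt lam i j : in_diagram lam i j -> tlam lam i j < sumn lam.
Proof. by move=> /andP [_ H]; apply: flatten_indexP. Qed.

Lemma wperm_node lam n f i j : sumn lam = n -> in_diagram lam i j ->
  nth 0 (wperm lam n f) (tlam lam i j) = f i j.
Proof.
move=> Hn Hd; have := tlam_lt Hd; rewrite Hn => Hlt.
move: Hd => /andP [_ H].
by rewrite wperm_nth // /tlam flatten_indexKl ?flatten_indexKr.
Qed.

Lemma pos_node lam m : m < sumn lam ->
  in_diagram lam (reshape_index lam m) (reshape_offset lam m) /\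
  tlam lam (reshape_index lam m) (reshape_offset lam m) = m.
Proof.
move=> Hm; split; last exact: reshape_indexK.
by apply/andP; split; [apply: reshape_indexP | apply: reshape_offsetP].
Qed.

Theorem mainTheorem15 (n : nat) (lam : seq nat) (kappa : int) (r c : nat) :
  is_partition lam -> sumn lam = n -> in_diagram lam r.+1 c ->
  ~ (exists t : nat -> nat -> nat,
       [/\ is_tableau lam n t, row_strict lam t,
           tab_sdom lam n t (garnir lam r c) &
           res_seq lam n kappa t = res_seq lam n kappa (garnir lam r c)]).
Proof.
move=> Hpart Hsum Hd [t [[Htn Htinj Htsurj] Hrs [Hdom Hneq] Hres]].
apply: Hneq.
set g := garnir lam r c.
set L := nth 0 lam r.
set a := tlam lam r c.
have Hr1 : r.+1 < size lam by case/andP: Hd.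
have Hr : r < size lam by lia.
have HcL1 : c < nth 0 lam r.+1 by case/andP: Hd.
have HLL : nth 0 lam r.+1 <= L.
  case/andP: Hpart => Hsort _.
  have Htr : transitive geq by move=> x y z /= H1 H2; lia.
  have Hrf : reflexive geq by move=> x /=.
  have := sorted_leq_nth Htr Hrf 0 Hsort.
  by move=> /(_ r r.+1); rewrite !inE; apply => //.
have HcL : c < L by lia.
have Ea : a = sumn (take r lam) + c by [].
have Hrow1 : forall j, tlam lam r.+1 j = a + (L - c) + j.
  by move=> j; rewrite /tlam /flatten_index (take_nth 0 Hr) sumn_rcons -/L; lia.
have Hrow0 : forall j, tlam lam r j = a + j - c.
  by move=> j; rewrite /tlam /flatten_index; lia.
set b := a + L.
have Eb : b = a + L by [].
have Hdr1 : forall j, j <= c -> in_diagram lam r.+1 j.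
  by move=> j Hj; apply/andP; split => //; lia.
have Hdr0 : forall j, j < L -> in_diagram lam r j.
  by move=> j Hj; apply/andP; split.
have Hbn : b < n.
  have := tlam_lt (Hdr1 c (leqnn _)); rewrite Hrow1 Hsum; lia.
have Hbelt : forall i j, in_diagram lam i j -> a <= tlam lam i j <= b ->
    (i = r.+1 /\ j <= c) \/ (i = r /\ c <= j).
  move=> i j Hij /andP [H1 H2].
  have Ea' : a = tlam lam r c by [].
  have Eb' : b = tlam lam r.+1 c by rewrite Hrow1; lia.
  have Hrc : in_diagram lam r c by exact: Hdr0.
  have Hr1c : in_diagram lam r.+1 c by exact: Hdr1.
  move: H1 H2; rewrite {1}Ea' Eb' !tlam_lex // => H1 H2; lia.
have Hg1 : forall j, j <= c -> g r.+1 j = a + j.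
  by move=> j Hj; rewrite /g /garnir eqxx Hj.
have Hg0 : forall j, c <= j -> g r j = a + c.+1 + (j - c).
  move=> j Hj; rewrite /g /garnir eqxx Hj /=.
  by have -> : (r == r.+1) = false by apply/eqP; lia.
have Hgn : forall i j, in_diagram lam i j -> ~~ (a <= tlam lam i j <= b) ->
    g i j = tlam lam i j.
  move=> i j Hij Hnb; rewrite /g /garnir.
  case: ifP => [/andP [/eqP Ei Hj]|_].
    by subst i; move: Hnb; rewrite Hrow1; lia.
  case: ifP => [/andP [/eqP Ei Hj]|_] //.
  subst i; move: Hnb Hij; rewrite Hrow0 => Hnb /andP [_ Hj2]; lia.
have Hgb : forall i j, in_diagram lam i j -> a <= tlam lam i j <= b ->
    a <= g i j <= b.
  move=> i j Hij Hb; have [[Ei Hj]|[Ei Hj]] := Hbelt i j Hij Hb; subst i.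
    by rewrite Hg1 //; lia.
  by rewrite Hg0 //; move: Hij => /andP [_]; rewrite -/L => Hj2; lia.
set v := wperm lam n g.
set u := wperm lam n t.
have HPv : forall p, p < a \/ b <= p -> Pinv v p.
  move=> p Hp q Hq; rewrite size_wperm => Hqs.
  have Hq' : q < sumn lam by rewrite Hsum.
  have [Hqd Eq] := pos_node Hq'.
  rewrite wperm_nth //.
  case: (boolP (a <= q <= b)) => Hb.
    by have := Hgb _ _ Hqd; rewrite Eq => /(_ Hb); lia.
  by rewrite Hgn ?Eq.
have HQv : forall p, p <= a \/ b < p -> Qinv v p.
  move=> p Hp q Hq; rewrite size_wperm => Hqs.
  have Hq' : q < sumn lam by rewrite Hsum.
  have [Hqd Eq] := pos_node Hq'.
  rewrite wperm_nth //.
  case: (boolP (a <= q <= b)) => Hb.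
    by have := Hgb _ _ Hqd; rewrite Eq => /(_ Hb); lia.
  by rewrite Hgn ?Eq.
have HPu : forall p, p < a \/ b <= p -> Pinv u p.
  by move=> p Hp; apply: (proj1 (bruhat_PQ p Hdom)); apply: HPv.
have HQu : forall p, p <= a \/ b < p -> Qinv u p.
  by move=> p Hp; apply: (proj2 (bruhat_PQ p Hdom)); apply: HQv.
have HtU : forall i j, in_diagram lam i j ->
    (~~ (a <= tlam lam i j <= b) -> t i j = tlam lam i j) /\
    (a <= tlam lam i j <= b -> a <= t i j <= b).
  move=> i j Hij.
  have Hm : tlam lam i j < size u by rewrite size_wperm -Hsum; apply: tlam_lt.
  rewrite -(@wperm_node lam n t i j Hsum Hij) -/u.
  split=> Hb.
    have [Hlt|Hgt] : tlam lam i j < a \/ b < tlam lam i j by lia.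
      have := HPu (tlam lam i j) (or_introl Hlt) _ (leqnn _) Hm.
      have := HQu (tlam lam i j) (or_introl (ltnW Hlt)) _ (leqnn _) Hm.
      lia.
    have := HPu (tlam lam i j) (or_intror (ltnW Hgt)) _ (leqnn _) Hm.
    have := HQu (tlam lam i j) (or_intror Hgt) _ (leqnn _) Hm.
    lia.
  have := HPu b (or_intror (leqnn _)) (tlam lam i j) (_ : _ <= b) Hm.
  have := HQu a (or_introl (leqnn _)) (tlam lam i j) (_ : a <= _) Hm.
  lia.
set e : int := (kappa - (r.+1)%:Z)%R.
have Hresg : forall x, x <= L ->
    nth 0 (res_seq lam n kappa g) (a + x) = `|(e + x%:Z)%R|%N.
  move=> x Hx.
  have Hxn : a + x < n by lia.
  rewrite res_nth //.
  have Huniq : forall i' j', in_diagram lam i' j' -> g i' j' = a + x ->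
      (i' = r.+1 /\ j' = x /\ x <= c) \/ (i' = r /\ j' = x.-1 /\ c < x).
    move=> i' j' Hd' Hg'.
    case: (boolP (a <= tlam lam i' j' <= b)) => Hb.
      have [[Ei Hj]|[Ei Hj]] := Hbelt i' j' Hd' Hb; subst i'.
        by left; move: Hg'; rewrite Hg1 //; lia.
      by right; move: Hg'; rewrite Hg0 //; lia.
    by rewrite Hgn // in Hg'; lia.
  have [Hxc|Hxc] := leqP x c.
    rewrite (@node_of_eq lam g (a + x) r.+1 x) /=.
    - rewrite /node_res /e; lia.
    - exact: Hdr1.
    - exact: Hg1.
    - by move=> i' j' Hd' Hg'; have [[-> [-> _]]|[_ [_ ?]]] := Huniq i' j' Hd' Hg'; [|lia].
  rewrite (@node_of_eq lam g (a + x) r x.-1) /=.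
  - rewrite /node_res /e; lia.
  - apply: Hdr0; lia.
  - rewrite Hg0; lia.
  - by move=> i' j' Hd' Hg'; have [[_ [_ ?]]|[-> [-> _]]] := Huniq i' j' Hd' Hg'; [lia|].
have Hrest : forall i j, in_diagram lam i j ->
    nth 0 (res_seq lam n kappa t) (t i j) = node_res kappa i j.
  move=> i j Hij; rewrite res_nth; last exact: Htn.
  rewrite (@node_of_eq lam t (t i j) i j) //.
  by move=> i' j' Hd' Ht'; apply: Htinj.
have HtA : forall i j, in_diagram lam i j -> a <= tlam lam i j <= b -> a <= t i j <= b.
  by move=> i j Hij; apply: (proj2 (HtU i j Hij)).
have Hb1 : forall j, j <= c -> a <= tlam lam r.+1 j <= b.
  by move=> j Hj; rewrite Hrow1; lia.
have Hb0 : forall i, c + i < L -> a <= tlam lam r (c + i) <= b.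
  by move=> i Hi; rewrite Hrow0; lia.
pose X j := t r.+1 j - a.
pose Y i := t r (c + i) - a.
have HX1 : forall j, j <= c -> t r.+1 j = a + X j.
  by move=> j Hj; have := HtA _ _ (Hdr1 j Hj) (Hb1 j Hj); rewrite /X; lia.
have HY1 : forall i, c + i < L -> t r (c + i) = a + Y i.
  by move=> i Hi; have := HtA _ _ (Hdr0 (c + i) Hi) (Hb0 i Hi); rewrite /Y; lia.
have [HX HY] : (forall j, j <= c -> X j = j) /\
    (forall i, c + i < L -> Y i = (c + i).+1).
  apply: (@belt_comb c L e X Y HcL).
  - by move=> j Hj; have := HtA _ _ (Hdr1 j Hj) (Hb1 j Hj); rewrite /X; lia.
  - by move=> i Hi; have := HtA _ _ (Hdr0 (c + i) Hi) (Hb0 i Hi); rewrite /Y; lia.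
  - move=> j Hj.
    have := Hrs r.+1 j (Hdr1 j.+1 Hj).
    have := HX1 j (ltnW Hj); have := HX1 j.+1 Hj; lia.
  - move=> i Hi.
    have := Hrs r (c + i) (Hdr0 (c + i).+1 Hi).
    have := HY1 i (ltnW Hi); have := HY1 i.+1; rewrite addnS => /(_ Hi); lia.
  - move=> j i Hj Hi E.
    have := Htinj _ _ _ _ (Hdr1 j Hj) (Hdr0 (c + i) Hi).
    rewrite HX1 // HY1 // E => /(_ erefl) [] ?; lia.
  - move=> k Hk.
    have Hkn : a + k < n by lia.
    have [i' [j' [Hd' Ht']]] := Htsurj _ Hkn.
    case: (boolP (a <= tlam lam i' j' <= b)) => Hb.
      have [[Ei Hj]|[Ei Hj]] := Hbelt i' j' Hd' Hb; subst i'.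
        by left; exists j' => //; rewrite /X Ht'; lia.
      right; exists (j' - c).
        by move: Hd' => /andP [_]; rewrite -/L; lia.
      by rewrite /Y subnKC // Ht'; lia.
    by have := (proj1 (HtU i' j' Hd')) Hb; lia.
  - move=> j Hj.
    have := Hres; move=> /(congr1 (fun s => nth 0 s (t r.+1 j))).
    rewrite Hrest; last exact: Hdr1.
    rewrite HX1 // Hresg; last by have := HtA _ _ (Hdr1 j Hj) (Hb1 j Hj); rewrite /X; lia.
    rewrite /node_res /e; lia.
  - move=> i Hi.
    have := Hres; move=> /(congr1 (fun s => nth 0 s (t r (c + i)))).
    rewrite Hrest; last exact: Hdr0.
    rewrite HY1 // Hresg; last by have := HtA _ _ (Hdr0 (c + i) Hi) (Hb0 i Hi); rewrite /Y; lia.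
    rewrite /node_res /e; lia.
move=> i j Hij.
case: (boolP (a <= tlam lam i j <= b)) => Hb; last first.
  by rewrite (proj1 (HtU i j Hij)) // Hgn.
have [[Ei Hj]|[Ei Hj]] := Hbelt i j Hij Hb; subst i.
  by rewrite HX1 // HX // Hg1.
have Hjl : c + (j - c) < L by move: Hij => /andP [_]; rewrite -/L; lia.
rewrite Hg0 // -{1}(subnKC Hj) HY1 // HY //; lia.
Qed.
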